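(* For every $n$ with $2\le n\le\infty$, the identity $ytxsyx \approx ytxsxy$ is a finite identity basis for the $\sharp$-sylvester monoid $\mathrm{sylv}^\sharp_n$. Consequently, all $\sharp$-sylvester monoids of rank at least $2$ (including rank $\infty$) are equationally equivalent.
   Context: Let $\mathcal{A}=\{1<2<3<\cdots\}$, $\mathcal{A}_n=\{1<\cdots<n\}$, $\mathcal{A}_\infty=\mathcal{A}$. A left strict binary search tree is a labelled rooted binary tree (labels in $\mathcal{A}$) in which each node's label is $>$ every label in its left subtree and $\le$ every label in its right subtree. Inserting $a$ into such a tree $T$: if $T$ is empty, create a node labelled $a$; otherwise, with root label $x$, recursively insert $a$ into the left subtree if $a<x$ and into the right subtree otherwise. For $w=w_1\cdots w_k\in\mathcal{A}^*$, $\mathrm{P}^\sharp(w)$ is obtained from the empty tree by inserting $w_1,w_2,\dots,w_k$ in this order (reading left to right). The relation $u\equiv v\iff\mathrm{P}^\sharp(u)=\mathrm{P}^\sharp(v)$ is a congruence, and $\mathrm{sylv}^\sharp_n=\mathcal{A}_n^*/{\equiv}$. Identities: $\mathcal{X}$ is a countably infinite alphabet; an identity is $\mathbf{u}\approx\mathbf{v}$ with $\mathbf{u},\mathbf{v}\in\mathcal{X}^*$; a monoid $S$ satisfies it if $\varphi(\mathbf{u})=\varphi(\mathbf{v})$ for all maps $\varphi:\mathcal{X}\to S$ (extended to monoid homomorphisms). $\mathbf{u}\approx\mathbf{v}$ is derived from a set $\Sigma$ if there is a sequence $\mathbf{u}=\mathbf{u}_1,\dots,\mathbf{u}_m=\mathbf{v}$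 with $\mathbf{u}_i=\mathbf{a}\varphi(\mathbf{p})\mathbf{b}$, $\mathbf{u}_{i+1}=\mathbf{a}\varphi(\mathbf{q})\mathbf{b}$ for some words $\mathbf{a},\mathbf{b}\in\mathcal{X}^*$, a monoid endomorphism $\varphi$ of $\mathcal{X}^*$ (letters may go to the empty word), and $\mathbf{p}\approx\mathbf{q}\in\Sigma$. A finite identity basis for $S$ is a finite set $\Sigma$ of identities satisfied by $S$ from which every identity satisfied by $S$ is derived. Two monoids are equationally equivalent if they satisfy the same identities. *)

(* Defs.v *)
From Stdlib Require Import Relations.
From mathcomp Require Import all_boot.

Set Implicit Arguments.
Unset Strict Implicit.
Unset Printing Implicit Defensive.

(* A rank is [Some n] (alphabet A_n = {1 < ... < n}) or [None] (A_oo = {1 < 2 < ...}). *)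
Definition rank := option nat.

Definition rank_ge2 (n : rank) : bool :=
  if n is Some k then 2 <= k else true.

Definition in_alph (n : rank) (a : nat) : bool :=
  (0 < a) && (if n is Some k then a <= k else true).

Inductive tree : Type :=
  | Leaf : tree
  | Node : tree -> nat -> tree -> tree.

Fixpoint insert (a : nat) (t : tree) : tree :=
  match t with
  | Leaf => Node Leaf a Leaf
  | Node l x r => if a < x then Node (insert a l) x r else Node l x (insert a r)
  end.

Definition Psharp (w : seq nat) : tree := foldl (fun t a => insert a t) Leaf w.

Definition identity := (seq nat * seq nat)%type.

Definition subst (phi : nat -> seq nat) (w : seq nat) : seq nat := flatten (map phi w).

(* sylv#_n = A_n^* / ≡ satisfies u ≈ v: every map X -> sylv#_n lifts to a map
   X -> A_n^* (choose representatives), and since ≡ is a congruence the value of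
   a word is the class of the substituted word. *)
Definition sylv_satisfies (n : rank) (u v : seq nat) : Prop :=
  forall psi : nat -> seq nat,
    (forall x, all (in_alph n) (psi x)) ->
    Psharp (subst psi u) = Psharp (subst psi v).

Definition deriv_step (Sigma : seq identity) (w1 w2 : seq nat) : Prop :=
  exists (a b : seq nat) (phi : nat -> seq nat) (p q : seq nat),
    ((p, q) \in Sigma \/ (q, p) \in Sigma) /\
    w1 = a ++ subst phi p ++ b /\ w2 = a ++ subst phi q ++ b.

Definition derivable (Sigma : seq identity) : relation (seq nat) :=
  clos_refl_trans (seq nat) (deriv_step Sigma).

Definition sylv_finite_basis (n : rank) (Sigma : seq identity) : Prop :=
  (forall p q, (p, q) \in Sigma -> sylv_satisfies n p q) /\
  (forall u v, sylv_satisfies n u v -> derivable Sigma u v).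

(* Variables: x = 0, y = 1, t = 2, s = 3. *)
Definition ytxsyx : seq nat := [:: 1; 2; 0; 3; 1; 0].
Definition ytxsxy : seq nat := [:: 1; 2; 0; 3; 0; 1].

(* Main.v *)
Require Import Defs.
From mathcomp Require Import all_boot.
From mathcomp Require Import zify.
From Stdlib Require Import Relations.

Set Implicit Arguments.
Unset Strict Implicit.
Unset Printing Implicit Defensive.
Lemma foldl_node (w : seq nat) l x r :
  foldl (fun t a => insert a t) (Node l x r) w =
  Node (foldl (fun t a => insert a t) l [seq a <- w | a < x]) x
       (foldl (fun t a => insert a t) r [seq a <- w | x <= a]).
Proof.
elim: w l r => [|a w IH] l r //=.
case: ifP => H; rewrite IH /=.
  by rewrite leqNgt H.
by rewrite leqNgt H.
Qed.

Lemma Psharp_cons c w :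
  Psharp (c :: w) = Node (Psharp [seq a <- w | a < c]) c (Psharp [seq a <- w | c <= a]).
Proof. by rewrite /Psharp /= foldl_node. Qed.

Fixpoint lt_restr x t := match t with
 | Leaf => Leaf
 | Node l c r => if c < x then Node l c (lt_restr x r) else lt_restr x l end.
Fixpoint ge_restr x t := match t with
 | Leaf => Leaf
 | Node l c r => if x <= c then Node (ge_restr x l) c r else ge_restr x r end.

Lemma Psharp_lt x w : Psharp [seq a <- w | a < x] = lt_restr x (Psharp w).
Proof.
move: {2}(size w) (leqnn (size w)) => N.
elim: N w => [|N IH] [|c w] //= Hs.
rewrite Psharp_cons /=.
case: ifP => Hc.
- rewrite Psharp_cons /= -filter_predI.
  have -> : [seq a <- w | predI (fun a => a < c) (fun a => a < x) a] = [seq a <- w | a < c].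
    apply: eq_filter => a /=. apply/andP/idP => [[]//|H]; split=>//; exact: ltn_trans H Hc.
  rewrite -IH; last by rewrite size_filter (leq_trans (count_size _ _)).
  by rewrite -!filter_predI; congr (Node _ _ (Psharp _)); apply: eq_filter => a /=; rewrite andbC.
- rewrite -IH; last by rewrite size_filter (leq_trans (count_size _ _)).
  rewrite -filter_predI; congr Psharp; apply: eq_filter => a /=.
  apply/idP/andP => [H|[]//]; split=>//; move/negbT: Hc; rewrite -leqNgt => Hc.
  exact: leq_trans H Hc.
Qed.

Lemma Psharp_ge x w : Psharp [seq a <- w | x <= a] = ge_restr x (Psharp w).
Proof.
move: {2}(size w) (leqnn (size w)) => N.
elim: N w => [|N IH] [|c w] //= Hs.
rewrite Psharp_cons /=.
case: ifP => Hc.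
- rewrite Psharp_cons /=.
  rewrite -IH; last by rewrite size_filter (leq_trans (count_size _ _)).
  rewrite -!filter_predI; congr Node; congr Psharp; apply: eq_filter => a /=.
    by rewrite andbC.
  apply/andP/idP => [[]//|H]; split=>//; exact: leq_trans Hc H.
- rewrite -IH; last by rewrite size_filter (leq_trans (count_size _ _)).
  rewrite -filter_predI; congr Psharp; apply: eq_filter => a /=.
  apply/idP/andP => [H|[]//]; split=>//; move/negbT: Hc; rewrite -ltnNge => Hc.
  exact: ltnW (leq_trans Hc H).
Qed.

Lemma cong_tree t u v : Psharp u = Psharp v ->
  foldl (fun t a => insert a t) t u = foldl (fun t a => insert a t) t v.
Proof.
elim: t u v => [|l IHl x r IHr] u v H; first exact H.
rewrite !foldl_node; congr Node.
  by apply: IHl; rewrite !Psharp_lt H.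
by apply: IHr; rewrite !Psharp_ge H.
Qed.

Lemma cong_ctx a b u v : Psharp u = Psharp v -> Psharp (a ++ u ++ b) = Psharp (a ++ v ++ b).
Proof.
move=> H; rewrite /Psharp !foldl_cat; congr foldl; exact: cong_tree.
Qed.

Fixpoint sep t a b := match t with
 | Leaf => false
 | Node l x r => if (a < x) && (b < x) then sep l a b
                 else if (x <= a) && (x <= b) then sep r a b else true end.

Lemma all_eq_comm (A B : seq nat) : (forall a b, a \in A -> b \in B -> a = b) -> A ++ B = B ++ A.
Proof.
case: A => [|a A]; first by rewrite cats0.
case: B => [|b B]; first by rewrite cats0.
move=> H.
have HA : forall x, x \in a :: A -> x = b by move=> x Hx; exact: (H x b Hx (mem_head b B)).
have HB : forall x, x \in b :: B -> x = a by move=> x Hx; symmetry; exact: (H a x (mem_head a A) Hx).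
have ab : a = b by apply: HA; exact: mem_head.
have -> : a :: A = nseq (size (a::A)) a.
  apply/all_pred1P/allP => x Hx; apply/eqP; rewrite (HA x Hx) ab //.
have -> : b :: B = nseq (size (b::B)) a.
  apply/all_pred1P/allP => x Hx; apply/eqP; exact: HB.
by rewrite -!nseqD addnC.
Qed.

Lemma comm_tree t A B :
  (forall a b, a \in A -> b \in B -> a = b \/ sep t a b) ->
  foldl (fun t a => insert a t) t (A ++ B) = foldl (fun t a => insert a t) t (B ++ A).
Proof.
elim: t A B => [|l IHl x r IHr] A B H.
  rewrite (@all_eq_comm A B) // => a b Ha Hb; by case: (H a b Ha Hb).
rewrite !foldl_node !filter_cat; congr Node.
  apply: IHl => a b; rewrite !mem_filter => /andP[Ha HA] /andP[Hb HB].
  by case: (H a b HA HB) => [->|/=]; [left|rewrite Ha Hb /=; right].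
apply: IHr => a b; rewrite !mem_filter => /andP[Ha HA] /andP[Hb HB].
case: (H a b HA HB) => [->|/=]; [by left|].
by rewrite ltnNge Ha Hb /=; right.
Qed.

Lemma sepC t a b : sep t a b = sep t b a.
Proof. elim: t => [|l IHl x r IHr] //=; by rewrite IHl IHr [(b < x) && _]andbC [(x <= b) && _]andbC. Qed.

Fixpoint mem_path t (d : nat) := match t with
 | Leaf => false
 | Node l x r => (x == d) || (if d < x then mem_path l d else mem_path r d) end.

Lemma mem_path_insert t (a d : nat) : mem_path t d || (a == d) -> mem_path (insert a t) d.
Proof.
elim: t => [|l IHl x r IHr] /=; first by move=> ->.
move=> H.
case Hax: (a < x) => /=; case Exd: (x == d) => //=; rewrite Exd /= in H;
  case Hd: (d < x); rewrite Hd in H.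
- exact: IHl.
- case/orP: H => [//|/eqP E]; by move: Hd; rewrite -E Hax.
- case/orP: H => [//|/eqP E]; by move: Hd; rewrite -E Hax.
- exact: IHr.
Qed.

Lemma mem_path_foldl t (w : seq nat) (d : nat) : mem_path t d || (d \in w) ->
  mem_path (foldl (fun t a => insert a t) t w) d.
Proof.
elim: w t => [|a w IH] t /=; first by rewrite orbF.
rewrite in_cons => H; apply: IH.
case/orP: H => [H|/orP[/eqP->|->]]; last by rewrite orbT.
  by rewrite mem_path_insert ?H.
by rewrite mem_path_insert ?eqxx ?orbT.
Qed.

Lemma mem_path_sep t (c d : nat) : mem_path t d -> c < d -> sep t c d.
Proof.
elim: t => [|l IHl x r IHr] //= Hm Hcd.
case: (x =P d) Hm => [Exd _|Hxd /= Hm].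
  subst x. by rewrite ltnn andbF leqNgt Hcd.
case Hdx: (d < x) Hm => Hm.
  by rewrite (ltn_trans Hcd Hdx) /= IHl.
rewrite andbF.
case Hxc: (x <= c) => /=.
  by rewrite (leqNgt x d) Hdx /= IHr.
done.
Qed.

Lemma sep_prefix (p : seq nat) a b : a \in p -> b \in p -> a = b \/ sep (Psharp p) a b.
Proof.
move=> Ha Hb; case: (ltngtP a b) => H; [right|right|by left].
  apply: mem_path_sep H; rewrite /Psharp; apply: mem_path_foldl; by rewrite Hb.
rewrite sepC; apply: mem_path_sep H; apply: mem_path_foldl; by rewrite Ha.
Qed.

Lemma identity_holds Y T X S :
  Psharp (Y ++ T ++ X ++ S ++ Y ++ X) = Psharp (Y ++ T ++ X ++ S ++ X ++ Y).
Proof.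
have E : forall Z, Y ++ T ++ X ++ S ++ Z = (Y ++ T ++ X ++ S) ++ Z by move=> Z; rewrite !catA.
rewrite !E /Psharp !(foldl_cat _ _ (Y ++ T ++ X ++ S)).
apply: comm_tree => a b Ha Hb; apply: sep_prefix; rewrite !mem_cat ?Ha ?Hb ?orbT //.
Qed.
Definition Sig : seq identity := [:: (ytxsyx, ytxsxy)].

Lemma subst_cat phi u v : subst phi (u ++ v) = subst phi u ++ subst phi v.
Proof. by rewrite /subst map_cat flatten_cat. Qed.

Lemma subst_comp psi phi w : subst psi (subst phi w) = subst (fun z => subst psi (phi z)) w.
Proof.
elim: w => [|a w IH] //.
have -> : subst phi (a :: w) = phi a ++ subst phi w by [].
by rewrite subst_cat IH.
Qed.

Lemma subst_id6 (chi : nat -> seq nat) :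
  subst chi ytxsyx = chi 1 ++ chi 2 ++ chi 0 ++ chi 3 ++ chi 1 ++ chi 0 /\
  subst chi ytxsxy = chi 1 ++ chi 2 ++ chi 0 ++ chi 3 ++ chi 0 ++ chi 1.
Proof. by rewrite /subst /= !cats0. Qed.

Lemma step_sound w1 w2 psi : deriv_step Sig w1 w2 -> Psharp (subst psi w1) = Psharp (subst psi w2).
Proof.
case=> [a [b [phi [p [q [Hin [-> ->]]]]]]].
rewrite !subst_cat !subst_comp; apply: cong_ctx.
set chi := fun z => _.
have [E1 E2] := subst_id6 chi.
rewrite !inE in Hin.
case: Hin => /eqP [-> ->]; rewrite E1 E2; [|symmetry]; exact: identity_holds.
Qed.

Lemma derivable_sound u v psi : derivable Sig u v -> Psharp (subst psi u) = Psharp (subst psi v).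
Proof.
elim=> [x y H|x|x y z _ H1 _ H2]; [exact: step_sound|done|by rewrite H1 H2].
Qed.

Lemma derivable_sym u v : derivable Sig u v -> derivable Sig v u.
Proof.
elim=> [x y H|x|x y z _ H1 _ H2]; [|exact: rt_refl|exact: rt_trans H2 H1].
apply: rt_step.
case: H => [a [b [phi [p [q [Hin [E1 E2]]]]]]].
exists a, b, phi, q, p; split; [tauto|by split].
Qed.

Lemma swap_der p x y b : x \in p -> y \in p ->
  derivable Sig (p ++ x :: y :: b) (p ++ y :: x :: b).
Proof.
case: (x =P y) => [->|Hxy] Hx Hy; first exact: rt_refl.
have [p1 [p2 [p3 [c [d [Ep Ecd]]]]]] : exists p1 p2 p3 c d,
    p = p1 ++ c :: p2 ++ d :: p3 /\ ((c, d) = (x, y) \/ (c, d) = (y, x)).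
  move: Hy; case/splitPr: Hx => q1 q2.
  rewrite mem_cat in_cons; case/orP => [Hy|/orP[/eqP E|Hy]].
  - case/splitPr: Hy => r1 r2. exists r1, r2, q2, y, x; split; [|by right].
    by rewrite -catA.
  - by case: Hxy.
  - case/splitPr: Hy => r1 r2. by exists q1, r1, r2, x, y; split; [|left].
apply: rt_step.
pose phi := fun z : nat => if z == 1 then [:: c] else if z == 2 then p2
  else if z == 0 then [:: d] else if z == 3 then p3 else [::].
have [E1 E2] := subst_id6 phi.
rewrite /phi /= in E1 E2.
case: Ecd => [[<- <-]|[<- <-]].
- exists p1, b, phi, ytxsyx, ytxsxy; split; first by left; rewrite inE.
  by rewrite E1 E2 Ep; split; rewrite -catA; congr (_ ++ _); rewrite /= -?catA /= -?catA /= -?catA.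
- exists p1, b, phi, ytxsxy, ytxsyx; split; first by right; rewrite inE.
  by rewrite E1 E2 Ep; split; rewrite -catA; congr (_ ++ _); rewrite /= -?catA /= -?catA /= -?catA.
Qed.

Lemma bubble v1 p a v2 : a \in p -> {subset v1 <= p} ->
  derivable Sig (p ++ v1 ++ a :: v2) (p ++ a :: v1 ++ v2).
Proof.
elim: v1 p => [|c v1 IH] p Ha Hs /=; first exact: rt_refl.
apply: rt_trans (_ : derivable Sig (p ++ c :: a :: v1 ++ v2) _).
  have := IH (rcons p c); rewrite !cat_rcons; apply.
    by rewrite mem_rcons in_cons Ha orbT.
  by move=> z Hz; rewrite mem_rcons in_cons Hs ?orbT // in_cons Hz orbT.
apply: swap_der => //; apply: Hs; exact: mem_head.
Qed.

Definition h (x y : nat) (w : seq nat) := count_mem x (take (index y w) w).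

Lemma h_cat x y w1 w2 : y \notin w1 -> h x y (w1 ++ w2) = count_mem x w1 + h x y w2.
Proof.
move=> Hy; rewrite /h index_cat (negbTE Hy) take_cat ltnNge leq_addr /= addKn.
by rewrite count_cat.
Qed.

Lemma h_cons x y a w : a != y -> h x y (a :: w) = (a == x) + h x y w.
Proof.
move=> Hay; have := h_cat x w (_ : y \notin [:: a]); rewrite /= addn0; apply.
by rewrite inE eq_sym.
Qed.
Lemma B2 N : forall (u v p S : seq nat), size u + size v <= N ->
  (forall x, count_mem x u = count_mem x v) ->
  (forall x y, x != y -> y \notin S -> h x y u = h x y v) ->
  {subset S <= p} -> derivable Sig (p ++ u) (p ++ v).
Proof.
elim: N => [|N IH] u v p S Hsz Hc Hh HS.
  by case: u Hc Hh Hsz => [|? ?]; case: v => [|? ?] //= *; exact: rt_refl.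
have key : forall (a : nat) u' v, size (a :: u') + size v <= N.+1 ->
  (forall x, count_mem x (a :: u') = count_mem x v) ->
  (forall x y, x != y -> y \notin S -> h x y (a :: u') = h x y v) ->
  a \in S -> derivable Sig (p ++ a :: u') (p ++ v).
  move=> {Hsz Hc Hh u v} a u' v Hsz Hc Hh HaS.
  have Hav : a \in v by rewrite -has_pred1 has_count -Hc /= eqxx.
  pose i := index a v; pose v1 := take i v; pose v2 := drop i.+1 v.
  have Ev : v = v1 ++ a :: v2.
    by rewrite -[v in LHS](cat_take_drop i) (drop_nth a) ?index_mem // nth_index.
  have Hav1 : a \notin v1 by rewrite in_take // ltnn.
  have Hv1S : {subset v1 <= S}.
    move=> y Hy; apply/negPn/negP => HyS.
    have Hya : y != a by apply: contraNneq Hav1 => <-.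
    have := Hh a y (_ : a != y) HyS.
    rewrite eq_sym Hya => /(_ isT).
    rewrite h_cons; last by rewrite eq_sym.
    rewrite eqxx Ev /h index_cat Hy take_cat index_mem Hy.
    have -> : count_mem a (take (index y v1) v1) = 0.
      by apply/count_memPn; apply: contra Hav1; apply: mem_take.
    by [].
  rewrite Ev.
  apply: rt_trans (_ : derivable Sig (p ++ a :: v1 ++ v2) _); last first.
    apply: derivable_sym; apply: bubble; first exact: HS.
    by move=> z Hz; apply: HS; apply: Hv1S.
  have := IH u' (v1 ++ v2) (rcons p a) S; rewrite !cat_rcons; apply.
  - move: Hsz; rewrite Ev /= !size_cat /=; lia.
  - move=> x; move: (Hc x); rewrite Ev /= !count_cat /=; lia.
  - move=> x y Hxy HyS.
    have Hay : a != y by apply: contraNneq HyS => <-.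
    have Hyv1 : y \notin v1 by apply: contra HyS; apply: Hv1S.
    have := Hh x y Hxy HyS; rewrite Ev h_cons // !h_cat // h_cons //; lia.
  - by move=> z Hz; rewrite mem_rcons in_cons HS ?orbT.
case: u Hsz Hc Hh => [|a u']; case: v => [|b v'] Hsz Hc Hh.
- exact: rt_refl.
- by move: (Hc b); rewrite /= eqxx.
- by move: (Hc a); rewrite /= eqxx.
case HaS: (a \in S); first exact: key.
case HbS: (b \in S).
  apply: derivable_sym; apply: (key b v' (a :: u')).
  - by rewrite addnC.
  - by move=> x; symmetry; apply: Hc.
  - by move=> x y Hxy HyS; symmetry; apply: Hh.
  - by rewrite HbS.
have Eab : a = b.
  apply/eqP/negPn/negP => Hab.
  have := Hh a b Hab (negbT HbS).
  by rewrite h_cons // eqxx /h /= eqxx.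
subst b.
have := IH u' v' (rcons p a) (a :: S); rewrite !cat_rcons; apply.
- move: Hsz => /=; lia.
- move=> x; move: (Hc x) => /=; lia.
- move=> x y Hxy; rewrite in_cons negb_or => /andP[Hya HyS].
  have := Hh x y Hxy HyS; rewrite !h_cons 1?eq_sym //; lia.
- move=> z; rewrite in_cons mem_rcons in_cons => /orP[->//|Hz]; by rewrite HS ?orbT.
Qed.

Fixpoint lead1 t := match t with
 | Leaf => 0
 | Node _ c r => if c == 1 then (lead1 r).+1 else 0 end.

Lemma lead1_P w : all (fun c => (c == 1) || (c == 2)) w -> lead1 (Psharp w) = index 2 w.
Proof.
elim: w => [|c w IH] //= /andP[Hc Hw].
rewrite Psharp_cons /=.
case/orP: Hc => /eqP ->; rewrite //=.
have -> : [seq a <- w | 1 <= a] = w.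
  apply/all_filterP; apply: sub_all Hw => a /orP[]/eqP-> //.
by rewrite IH.
Qed.

Lemma all_subst (P : pred nat) phi w : (forall z, all P (phi z)) -> all P (subst phi w).
Proof.
move=> H; elim: w => [|z w IH] //.
have -> : subst phi (z :: w) = phi z ++ subst phi w by [].
by rewrite all_cat H IH.
Qed.

Definition psi2 (x y z : nat) : seq nat :=
  if z == x then [:: 1] else if z == y then [:: 2] else [::].
Definition psi1 (x z : nat) : seq nat := if z == x then [:: 1] else [::].

Lemma index_psi2 x y w : x != y -> index 2 (subst (psi2 x y) w) = h x y w.
Proof.
move=> Hxy; elim: w => [|z w IH] //.
have -> : subst (psi2 x y) (z :: w) = psi2 x y z ++ subst (psi2 x y) w by [].
case: (z =P y) => [Ezy|Hzy].
  subst z; by rewrite /psi2 eq_sym (negbTE Hxy) eqxx /h /= eqxx.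
rewrite h_cons; last by apply/eqP.
rewrite /psi2; case: (z =P x) => [Ezx|Hzx] /=.
  by subst z; rewrite add1n -IH.
have /negbTE -> : z != y by apply/eqP.
have /negbTE Ezx : z != x by apply/eqP.
by rewrite add0n -IH.
Qed.

Lemma index_psi1 x w : index 2 (subst (psi1 x) w) = count_mem x w.
Proof.
elim: w => [|z w IH] //.
have -> : subst (psi1 x) (z :: w) = psi1 x z ++ subst (psi1 x) w by [].
rewrite /psi1 /=; case: (z =P x) => [Ezx|Hzx] /=.
  by subst z; rewrite add1n -IH.
by rewrite add0n -IH.
Qed.

Lemma in_alph12 n : rank_ge2 n -> in_alph n 1 /\ in_alph n 2.
Proof. by case: n => [k|] //= H; rewrite /in_alph (leq_trans _ H). Qed.

Lemma B1 n u v : rank_ge2 n -> sylv_satisfies n u v ->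
  (forall x, count_mem x u = count_mem x v) /\
  (forall x y, x != y -> h x y u = h x y v).
Proof.
move=> Hn Hs; have [H1 H2] := in_alph12 Hn.
have A12 : forall phi w, (forall z, all (fun c => (c == 1) || (c == 2)) (phi z)) ->
    index 2 (subst phi w) = lead1 (Psharp (subst phi w)).
  by move=> phi w Hp; rewrite lead1_P //; apply: all_subst.
split.
  move=> x.
  have P1 : forall z, all (fun c => (c == 1) || (c == 2)) (psi1 x z).
    by move=> z; rewrite /psi1; case: ifP.
  have P2 : forall z, all (in_alph n) (psi1 x z).
    by move=> z; rewrite /psi1; case: ifP; rewrite /= ?H1.
  by rewrite -!index_psi1 (A12 _ u P1) (A12 _ v P1) (Hs _ P2).
move=> x y Hxy.
have P1 : forall z, all (fun c => (c == 1) || (c == 2)) (psi2 x y z).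
  by move=> z; rewrite /psi2; case: ifP => //; case: ifP.
have P2 : forall z, all (in_alph n) (psi2 x y z).
  by move=> z; rewrite /psi2; case: ifP; rewrite /= ?H1 //; case: ifP; rewrite /= ?H2.
by rewrite -!index_psi2 // (A12 _ u P1) (A12 _ v P1) (Hs _ P2).
Qed.

Lemma sat_derivable n u v : rank_ge2 n -> sylv_satisfies n u v -> derivable Sig u v.
Proof.
move=> Hn Hs; have [Hc Hh] := B1 Hn Hs.
have := @B2 (size u + size v) u v [::] [::] (leqnn _) Hc; apply => //.
by move=> x y Hxy _; apply: Hh.
Qed.

Theorem theorem4p7 :
  (forall n : rank, rank_ge2 n -> sylv_finite_basis n [:: (ytxsyx, ytxsxy)]) /\
  (forall n m : rank, rank_ge2 n -> rank_ge2 m ->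
     forall u v : seq nat, sylv_satisfies n u v <-> sylv_satisfies m u v).
Proof.
split.
  move=> n Hn; split.
    move=> p q; rewrite inE => /eqP [-> ->] psi _.
    by have [E1 E2] := subst_id6 psi; rewrite E1 E2 identity_holds.
  by move=> u v; apply: sat_derivable Hn.
move=> n m Hn Hm u v; split => H psi _; apply: derivable_sound; exact: sat_derivable H.
Qed.
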